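(* For any graph $G$, $\gamma_{oidR}(G)\le 2\gamma_{oiR}(G)$, with equality if and only if $G=\overline{K_n}$ (the edgeless graph on $n$ vertices).
   Context: Graphs are finite and simple. A DRD function of $G$ is $f:V(G)\to\{0,1,2,3\}$ such that every vertex with value $0$ has a neighbor with value $3$ or two neighbors with value $2$, and every vertex with value $1$ has a neighbor with value at least $2$; it is an OIDRD function if the set of vertices with value $0$ is independent, and $\gamma_{oidR}(G)$ is the minimum weight $\sum_v f(v)$ of an OIDRD function. A Roman dominating function is $f:V(G)\to\{0,1,2\}$ such that every vertex with value $0$ has a neighbor with value $2$; it is an outer independent Roman dominating function (OIRD function) if the set of vertices with value $0$ is independent, and $\gamma_{oiR}(G)$ is the minimum weight of an OIRD function. *)

(* Defs.v *)
(* A finite simple graph is a symmetric irreflexive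
   relation e on a finite type T of vertices. *)
From mathcomp Require Import all_boot all_order.
Set Implicit Arguments. Unset Strict Implicit. Unset Printing Implicit Defensive.

Section Domination.
Variables (T : finType) (e : rel T).

Definition is_DRD (f : {ffun T -> 'I_4}) : bool :=
  [forall v,
    ((f v : nat) == 0) ==>
      ([exists u, e v u && ((f u : nat) == 3)] ||
       (2 <= #|[set u | e v u & (f u : nat) == 2]|))] &&
  [forall v,
    ((f v : nat) == 1) ==> [exists u, e v u && (2 <= (f u : nat))]].

Definition zeros_independent (n : nat) (f : {ffun T -> 'I_n}) : bool :=
  [forall u, forall v, e u v ==> ~~ (((f u : nat) == 0) && ((f v : nat) == 0))].

Definition is_OIDRD (f : {ffun T -> 'I_4}) : bool :=
  is_DRD f && zeros_independent f.

Definition is_RD (f : {ffun T -> 'I_3}) : bool :=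
  [forall v, ((f v : nat) == 0) ==> [exists u, e v u && ((f u : nat) == 2)]].

Definition is_OIRD (f : {ffun T -> 'I_3}) : bool :=
  is_RD f && zeros_independent f.

Definition weight (n : nat) (f : {ffun T -> 'I_n}) : nat := \sum_(v : T) (f v : nat).

(* Minimum weights. The constant 3 (resp. 2) function is always an OIDRD
   (resp. OIRD) function of weight 3|V| (resp. 2|V|), so these defaults
   never undercut the true minimum. *)
Definition gamma_oidR : nat :=
  \big[minn/3 * #|T|]_(f : {ffun T -> 'I_4} | is_OIDRD f) weight f.

Definition gamma_oiR : nat :=
  \big[minn/2 * #|T|]_(f : {ffun T -> 'I_3} | is_OIRD f) weight f.

End Domination.

(* Main.v *)
Require Import Defs.
From mathcomp Require Import all_boot all_order.

Lemma le_bigmin (I : eqType) (r : seq I) (P : pred I) (F : I -> nat) d i :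
  i \in r -> P i -> \big[minn/d]_(j <- r | P j) F j <= F i.
Proof.
elim: r => // a r IH; rewrite in_cons big_cons => /orP [/eqP<- Pi | ir Pi].
  by rewrite Pi geq_minl.
case: ifP => _; last exact: IH.
exact: leq_trans (geq_minr _ _) (IH ir Pi).
Qed.

Lemma le_bigmin_fin (I : finType) (P : pred I) (F : I -> nat) d i :
  P i -> \big[minn/d]_(j | P j) F j <= F i.
Proof. by apply: le_bigmin; rewrite mem_index_enum. Qed.

Lemma bigmin_ge (I : finType) (P : pred I) (F : I -> nat) d m :
  m <= d -> (forall i, P i -> m <= F i) -> m <= \big[minn/d]_(j | P j) F j.
Proof.
move=> md H; apply: (big_ind (fun x => m <= x)) => //.
by move=> x y hx hy; rewrite leq_min hx hy.
Qed.

Lemma bigmin_attained (I : finType) (P : pred I) (F : I -> nat) d i0 :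
  P i0 -> F i0 <= d -> exists2 i, P i & \big[minn/d]_(j | P j) F j = F i.
Proof.
move=> P0 F0.
have : (\big[minn/d]_(j | P j) F j = d \/ exists2 i, P i & \big[minn/d]_(j | P j) F j = F i).
  apply: (big_ind (fun x => x = d \/ exists2 i, P i & x = F i)); first by left.
    by move=> x y hx hy; rewrite /minn; case: ifP.
  by move=> i Pi; right; exists i.
case=> // hd; exists i0 => //; apply/eqP; rewrite eqn_leq le_bigmin_fin // hd //.
Qed.

Definition hval (n : nat) : nat := if n == 0 then 0 else n.+1.

Lemma hval_lt4 (f : 'I_3) : hval f < 4.
Proof. by case: f => [[|[|[|]]]]. Qed.

Lemma hval_le (n : nat) : n < 3 -> hval n + (n == 2) <= 2 * n.
Proof. by case: n => [|[|[|]]]. Qed.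

Theorem theorem3 (T : finType) (e : rel T)
  (e_sym : symmetric e) (e_irr : irreflexive e) :
  gamma_oidR e <= 2 * gamma_oiR e /\
  (gamma_oidR e = 2 * gamma_oiR e <-> forall u v : T, ~~ e u v).
Proof.
pose c2 : {ffun T -> 'I_3} := [ffun => inord 2].
have c2v : forall x, (c2 x : nat) = 2 by move=> x; rewrite ffunE inordK.
have c2ok : is_OIRD e c2.
  rewrite /is_OIRD /is_RD /zeros_independent; apply/andP; split; first by apply/forallP => v; rewrite c2v.
  by apply/forallP => u; apply/forallP => v; rewrite !c2v implybT.
have c2w : weight c2 <= 2 * #|T|.
  by rewrite /weight (eq_bigr (fun _ => 2)) 1?sum_nat_const 1?mulnC // => x _; rewrite c2v.
have [f0 f0ok f0w] := @bigmin_attained _ (fun f => is_OIRD e f) (fun f => weight f) (2 * #|T|) c2 c2ok c2w.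
rewrite -/(gamma_oiR e) in f0w.
pose g : {ffun T -> 'I_4} := [ffun x => inord (hval (f0 x))].
have gv : forall x, (g x : nat) = hval (f0 x) by move=> x; rewrite ffunE inordK // hval_lt4.
have gok : is_OIDRD e g.
  move: f0ok => /andP [/forallP RD /forallP ZI].
  rewrite /is_OIDRD /is_DRD /zeros_independent; apply/andP; split; first (apply/andP; split).
  - apply/forallP => v; apply/implyP; rewrite gv /hval.
    case h0: ((f0 v : nat) == 0) => // _; move/implyP: (RD v); rewrite h0 => /(_ isT) /existsP [u /andP [evu fu]].
    by apply/orP; left; apply/existsP; exists u; rewrite evu gv /hval (eqP fu).
  - apply/forallP => v; apply/implyP; rewrite gv /hval; case h: ((f0 v : nat) == 0) => //=; by rewrite ?eqSS h.
  - apply/forallP => u; apply/forallP => v; apply/implyP => euv.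
    move/forallP: (ZI u) => /(_ v) /implyP /(_ euv).
    by rewrite !gv /hval; case: eqP; case: eqP.
have gw : weight g + #|[pred x | (f0 x : nat) == 2]| <= 2 * weight f0.
  rewrite /weight -sum1_card [X in _ + X]big_mkcond /= -big_split big_distrr /=.
  apply: leq_sum => x _; rewrite gv; have := @hval_le (f0 x) (ltn_ord _).
  by rewrite inE; case: (_ == 2).
have gam_g : gamma_oidR e <= weight g by apply: le_bigmin_fin.
have part1 : gamma_oidR e <= 2 * gamma_oiR e.
  by rewrite f0w; apply: leq_trans gam_g (leq_trans (leq_addr _ _) gw).
split => //; split.
- move=> heq u v; apply/negP => euv.
  have ne_uv : u != v by apply/eqP => huv; rewrite huv e_irr in euv.
  case: (boolP [exists x, (f0 x : nat) == 2]) => [/existsP [x fx] | no2].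
    have : 0 < #|[pred x | (f0 x : nat) == 2]| by apply/card_gt0P; exists x.
    move=> pos; have := leq_trans (leq_add gam_g (leqnn _)) gw.
    by rewrite heq -f0w -{2}(addn0 (2 * _)) leq_add2l leqNgt pos.
  (* f0 has no value 2 hence no value 0 *)
  have f0ge1 : forall x, 1 <= f0 x.
    move=> x; rewrite lt0n; apply/negP => /eqP h0.
    move: f0ok => /andP [/forallP /(_ x) /implyP /(_ (introT eqP h0)) /existsP [y /andP [_ fy]] _].
    by move/existsP: no2; apply; exists y.
  have wf0 : #|T| <= weight f0.
    by rewrite /weight -sum1_card; apply: leq_sum => x _; apply: f0ge1.
  pose g2 : {ffun T -> 'I_4} := [ffun x => inord (if x == u then 3 else if x == v then 0 else 2)].
  have g2v : forall x, (g2 x : nat) = (if x == u then 3 else if x == v then 0 else 2).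
    by move=> x; rewrite ffunE inordK //; case: eqP => //; case: eqP.
  have g2ok : is_OIDRD e g2.
    rewrite /is_OIDRD /is_DRD /zeros_independent; apply/andP; split; first (apply/andP; split).
    - apply/forallP => w; apply/implyP; rewrite g2v.
      case: (w =P u) => // _; case: (w =P v) => // -> _.
      by apply/orP; left; apply/existsP; exists u; rewrite e_sym euv g2v eqxx.
    - by apply/forallP => w; apply/implyP; rewrite g2v; case: (w =P u); case: (w =P v).
    - apply/forallP => a; apply/forallP => b; apply/implyP => eab.
      rewrite !g2v; case: (a =P u) => //= _; case: (a =P v) => //= ha.
      case: (b =P u) => //= _; case: (b =P v) => //= hb.
      by move: eab; rewrite ha hb e_irr.
  have g2w : weight g2 + 1 = 2 * #|T|.
    rewrite /weight (bigD1 v) //= (bigD1 u) //= !g2v eqxx (negbTE ne_uv) eq_sym (negbTE ne_uv) eqxx.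
    rewrite (eq_bigr (fun _ => 2)); last first.
      by move=> x /andP [xu xv]; rewrite g2v (negbTE xu) (negbTE xv).
    have -> : 2 * #|T| = \sum_(i : T) 2 by rewrite sum_nat_const mulnC.
    rewrite [RHS](bigD1 v) //= [X in _ = _ + X](bigD1 u) //= !addnA.
    by rewrite add0n addnAC.
  have g2le : gamma_oidR e <= weight g2 by apply: le_bigmin_fin.
  have : weight g2 + 1 <= weight g2.
    rewrite g2w; apply: leq_trans g2le; rewrite heq f0w leq_mul2l wf0 orbT //.
  by rewrite addn1 ltnn.
- move=> H.
  pose c1 : {ffun T -> 'I_3} := [ffun => inord 1].
  have c1v : forall x, (c1 x : nat) = 1 by move=> x; rewrite ffunE inordK.
  have c1ok : is_OIRD e c1.
    rewrite /is_OIRD /is_RD /zeros_independent; apply/andP; split; first by apply/forallP => v; rewrite c1v.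
    by apply/forallP => u; apply/forallP => v; rewrite !c1v implybT.
  have c1w : gamma_oiR e <= #|T|.
    apply: leq_trans (@le_bigmin_fin _ (fun f => is_OIRD e f) (fun f => weight f) (2 * #|T|) c1 c1ok) _.
    by rewrite /weight (eq_bigr (fun _ => 1)) 1?sum_nat_const 1?muln1 // => x _; rewrite c1v.
  have lo : 2 * #|T| <= gamma_oidR e.
    apply: bigmin_ge; first exact: (leq_mul (isT : 2 <= 3) (leqnn _)).
    move=> f /andP [/andP [/forallP D0 /forallP D1] _].
    have -> : 2 * #|T| = \sum_(i : T) 2 by rewrite sum_nat_const mulnC.
    apply: leq_sum => x _.
    case hx: (nat_of_ord (f x)) => [|[|n]] //.
      move: (D0 x); rewrite hx /= => /orP [/existsP [u /andP [exu _]] | ].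
        by rewrite (negbTE (H x u)) in exu.
      have -> : [set u | e x u & (f u : nat) == 2] = set0.
        by apply/setP => u; rewrite !inE (negbTE (H x u)).
      by rewrite cards0.
    move: (D1 x); rewrite hx /= => /existsP [u /andP [exu _]].
    by rewrite (negbTE (H x u)) in exu.
  apply/eqP; rewrite eqn_leq part1 /=.
  by apply: leq_trans lo; rewrite leq_mul2l c1w orbT.
Qed.
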